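(* Let $G=(V,E)$ be an infinite, locally finite, connected weighted graph (as described in the context). Assume that there exist a vertex $x_0\in V$ and a constant $C\geq 0$ such that $H(x)\leq C$ for all $x\in V$, where $H$ is the mean curvature function with respect to $x_0$. Let $v_0:V\to(0,\infty)$ be a bounded positive function. Then any bounded positive solution $v(t,x)$ of $$v_t=\Delta \log v \quad \text{on } (0,\infty)\times V$$ with initial data $v(0,\cdot)=v_0$ satisfies $$\sup_{x\in V} v(t,x)\leq \sup_{x\in V} v_0(x)\quad\text{for every } t\geq 0.$$
   Context: $G=(V,E)$ is an infinite, locally finite, connected graph without loops or multiple edges; $x\sim y$ means $x$ and $y$ are joined by an edge. Each edge $x\sim y$ carries a symmetric weight $\mu_{xy}=\mu_{yx}\geq 0$, with $d_x:=\sum_{y\sim x}\mu_{xy}>0$ for every $x\in V$. For $f:V\to\mathbb{R}$ the Laplacian is $\Delta f(x)=\frac{1}{d_x}\sum_{y\sim x}\mu_{xy}(f(y)-f(x))$. Fix $x_0\in V$ and let $r(x)=d(x,x_0)$ be the graph distance to $x_0$. The mean curvature is $H(x)=\Delta r(x)=\frac{d_+(x)-d_-(x)}{d_x}$, where $d_\pm(x)=\sum_{y\sim x,\ r(y)=r(x)\pm 1}\mu_{xy}$. A solution $v(t,x)$ is a function on $[0,\infty)\times V$, differentiable in $t$ for each fixed $x$, satisfying the equation pointwise for $t>0$ (with $\Delta$ acting in the $x$ variable); ''bounded'' means bounded on $[0,\infty)\times V$. *)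

(* Defs.v *)
From Stdlib Require Import Reals List Relations.
From Coquelicot Require Import Coquelicot.
Open Scope R_scope.

Section GraphDefs.
Variable V : Type.

Definition simple_graph (adj : V -> V -> Prop) : Prop :=
  (forall x y, adj x y -> adj y x) /\ (forall x, ~ adj x x).

(** Local finiteness: the neighbourhood of every vertex is the finite set
    enumerated (without repetition) by the list [nb x]. *)
Definition nbrs_list (adj : V -> V -> Prop) (nb : V -> list V) : Prop :=
  forall x, NoDup (nb x) /\ (forall y, adj x y <-> In y (nb x)).

Definition infinite_vertices : Prop := ~ exists l : list V, forall x, In x l.

Definition connected (adj : V -> V -> Prop) : Prop :=
  forall x y, clos_refl_trans V adj x y.

Inductive walk (adj : V -> V -> Prop) : V -> V -> nat -> Prop :=
| walk_nil : forall x, walk adj x x 0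
| walk_cons : forall x y z n, adj x y -> walk adj y z n -> walk adj x z (S n).

Definition is_dist_to (adj : V -> V -> Prop) (x0 : V) (r : V -> nat) : Prop :=
  forall x, walk adj x0 x (r x) /\ (forall m, walk adj x0 x m -> (r x <= m)%nat).

Definition sum_list (l : list V) (f : V -> R) : R :=
  fold_right (fun y a => f y + a) 0 l.

Definition deg (nb : V -> list V) (mu : V -> V -> R) (x : V) : R :=
  sum_list (nb x) (fun y => mu x y).

Definition good_weights (adj : V -> V -> Prop) (nb : V -> list V)
  (mu : V -> V -> R) : Prop :=
  (forall x y, adj x y -> mu x y = mu y x) /\
  (forall x y, adj x y -> 0 <= mu x y) /\
  (forall x, 0 < deg nb mu x).

Definition laplacian (nb : V -> list V) (mu : V -> V -> R) (f : V -> R) (x : V) : R :=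
  / deg nb mu x * sum_list (nb x) (fun y => mu x y * (f y - f x)).

Definition d_plus (nb : V -> list V) (mu : V -> V -> R) (r : V -> nat) (x : V) : R :=
  sum_list (nb x) (fun y => if Nat.eqb (r y) (S (r x)) then mu x y else 0).

Definition d_minus (nb : V -> list V) (mu : V -> V -> R) (r : V -> nat) (x : V) : R :=
  sum_list (nb x) (fun y => if Nat.eqb (S (r y)) (r x) then mu x y else 0).

Definition mean_curv (nb : V -> list V) (mu : V -> V -> R) (r : V -> nat) (x : V) : R :=
  (d_plus nb mu r x - d_minus nb mu r x) / deg nb mu x.

End GraphDefs.

Arguments simple_graph {V}.
Arguments nbrs_list {V}.
Arguments connected {V}.
Arguments is_dist_to {V}.
Arguments good_weights {V}.
Arguments laplacian {V}.
Arguments mean_curv {V}.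

(* Main.v *)
Require Import Defs.
From Stdlib Require Import Reals List Relations Lra Lia Classical.
From Coquelicot Require Import Coquelicot.
Open Scope R_scope.

Lemma ln_ineq a b : 0 < a -> 0 < b -> ln a - ln b <= (a - b) / b.
Proof.
  intros Ha Hb.
  assert (E : ln a - ln b = ln (a * / b)).
  { rewrite ln_mult; [|lra| apply Rinv_0_lt_compat; lra]. rewrite ln_Rinv; lra. }
  rewrite E. pose proof (exp_ineq1_le (ln (a * / b))) as H.
  rewrite exp_ln in H by (apply Rmult_lt_0_compat; [lra| apply Rinv_0_lt_compat; lra]).
  replace ((a - b) / b) with (a * / b - 1) by (field; lra). lra.
Qed.


Lemma walk_snoc (V : Type) (adj : V -> V -> Prop) a b n c : walk V adj a b n -> adj b c -> walk V adj a c (S n).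
Proof.
  induction 1; intros.
  - econstructor; eauto. constructor.
  - econstructor; eauto.
Qed.

Lemma walk0 (V : Type) (adj : V -> V -> Prop) a b : walk V adj a b 0 -> a = b.
Proof. intros H; inversion H; auto. Qed.

Lemma walk_unsnoc (V : Type) (adj : V -> V -> Prop) n : forall a b, walk V adj a b (S n) -> exists y, walk V adj a y n /\ adj y b.
Proof.
  induction n; intros a b H; inversion H; subst.
  - apply walk0 in H4; subst. exists a; split; [constructor|auto].
  - destruct (IHn _ _ H4) as [w [Hy1 Hy2]]. exists w; split; auto. econstructor; eauto.
Qed.

Lemma ball_list (V : Type) (adj : V -> V -> Prop) nb x0 (r : V -> nat) : nbrs_list adj nb -> is_dist_to adj x0 r ->
  forall N, exists L, forall x, (r x <= N)%nat -> In x L.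
Proof.
  intros Hnb Hr. induction N.
  - exists (x0 :: nil). intros x Hx. assert (r x = 0)%nat by lia.
    destruct (Hr x) as [W _]. rewrite H in W. apply walk0 in W. subst; simpl; auto.
  - destruct IHN as [L HL]. exists (L ++ flat_map nb L). intros x Hx.
    apply in_or_app. destruct (Nat.le_gt_cases (r x) N) as [h|h]; [left; auto|right].
    assert (r x = S N) by lia. destruct (Hr x) as [W _]. rewrite H in W.
    apply walk_unsnoc in W. destruct W as [y [Wy Ay]].
    apply in_flat_map. exists y. split.
    + apply HL. apply (proj2 (Hr y)); auto.
    + apply (proj2 (Hnb y)); auto.
Qed.

Lemma adj_r (V : Type) (adj : V -> V -> Prop) x0 (r : V -> nat) : is_dist_to adj x0 r -> simple_graph adj -> forall x y, adj x y ->
  (r y <= S (r x))%nat /\ (r x <= S (r y))%nat.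
Proof.
  intros Hr [Hs _] x y A. split.
  - apply (proj2 (Hr y)). apply walk_snoc with x; auto. apply Hr.
  - apply (proj2 (Hr x)). apply walk_snoc with y; auto. apply Hr.
Qed.


Lemma sum_list_le (V : Type) (l : list V) f g : (forall y, In y l -> f y <= g y) ->
  sum_list V l f <= sum_list V l g.
Proof.
  induction l; simpl; intros H; [lra|].
  pose proof (H a (or_introl eq_refl)). assert (sum_list V l f <= sum_list V l g) by (apply IHl; auto). lra.
Qed.
Lemma sum_list_ext (V : Type) (l : list V) f g : (forall y, In y l -> f y = g y) ->
  sum_list V l f = sum_list V l g.
Proof.
  induction l; simpl; intros H; [lra|].
  rewrite (H a (or_introl eq_refl)), IHl; auto.
Qed.
Lemma sum_list_lin (V : Type) (l : list V) c a b :
  sum_list V l (fun y => c * (a y - b y)) = c * (sum_list V l a - sum_list V l b).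
Proof. induction l; simpl; [ring|]. rewrite IHl; ring. Qed.

Lemma lap_bound (V : Type) (adj : V -> V -> Prop) nb mu x0 (r : V -> nat)
  (Hsimple : simple_graph adj) (Hnb : nbrs_list adj nb) (Hmu : good_weights adj nb mu)
  (Hr : is_dist_to adj x0 r) (g : V -> R) (eps : R) (x : V)
  (Hg : forall y, 0 < g y) (He : 0 <= eps)
  (Hmax : forall y, In y (nb x) -> g y - eps * INR (r y) <= g x - eps * INR (r x)) :
  laplacian nb mu (fun y => ln (g y)) x <= eps * mean_curv nb mu r x / g x.
Proof.
  destruct Hmu as [_ [Hm0 Hdeg]].
  unfold laplacian, mean_curv, d_plus, d_minus.
  set (D := sum_list V (nb x) (fun y => if Nat.eqb (r y) (S (r x)) then mu x y else 0)
        - sum_list V (nb x) (fun y => if Nat.eqb (S (r y)) (r x) then mu x y else 0)).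
  assert (Hs : sum_list V (nb x) (fun y => mu x y * (ln (g y) - ln (g x)))
               <= eps / g x * D).
  { unfold D. rewrite <- sum_list_lin.
    apply sum_list_le. intros y Hy.
    assert (A : adj x y) by (apply (proj2 (Hnb x)); auto).
    pose proof (Hm0 x y A) as Hmxy.
    pose proof (adj_r V adj x0 r Hr Hsimple x y A) as [R1 R2].
    pose proof (Hmax y Hy) as HM.
    pose proof (ln_ineq (g y) (g x) (Hg y) (Hg x)) as HL.
    assert (HL2 : ln (g y) - ln (g x) <= eps / g x * (INR (r y) - INR (r x))).
    { eapply Rle_trans; [exact HL|]. pose proof (Hg x).
      replace (eps / g x * (INR (r y) - INR (r x))) with ((eps * (INR (r y) - INR (r x))) / g x) by (field; lra).
      unfold Rdiv. apply Rmult_le_compat_r; [left; apply Rinv_0_lt_compat; lra| lra]. }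
    assert (Heq : (if Nat.eqb (r y) (S (r x)) then mu x y else 0) -
                  (if Nat.eqb (S (r y)) (r x) then mu x y else 0) = mu x y * (INR (r y) - INR (r x))).
    { destruct (Nat.eqb_spec (r y) (S (r x))) as [E1|E1];
      destruct (Nat.eqb_spec (S (r y)) (r x)) as [E2|E2]; try lia.
      - rewrite E1, S_INR; ring.
      - rewrite <- E2, S_INR; ring.
      - assert (r y = r x) as E by lia. rewrite E; ring. }
    rewrite Heq.
    replace (eps / g x * (mu x y * (INR (r y) - INR (r x)))) with (mu x y * (eps / g x * (INR (r y) - INR (r x)))) by ring.
    apply Rmult_le_compat_l; auto. }
  pose proof (Hdeg x) as Hd. unfold deg in Hd |- *.
  replace (eps * (D / sum_list V (nb x) (fun y => mu x y)) / g x)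
    with (/ sum_list V (nb x) (fun y => mu x y) * (eps / g x * D)) by (pose proof (Hg x); field; split; lra).
  apply Rmult_le_compat_l; [left; apply Rinv_0_lt_compat; lra | exact Hs].
Qed.


Lemma list_delta (V : Type) (L : list V) (s : R) (P : V -> R -> Prop) :
  (forall y, In y L -> exists d, 0 < d /\ forall t, Rabs (t - s) < d -> P y t) ->
  exists d, 0 < d /\ forall t, Rabs (t - s) < d -> forall y, In y L -> P y t.
Proof.
  induction L; intros H.
  - exists 1; split; [lra|]. intros t _ y [].
  - destruct IHL as [d1 [Hd1 H1]]. { intros y Hy; apply H; simpl; auto. }
    destruct (H a (or_introl eq_refl)) as [d2 [Hd2 H2]].
    exists (Rmin d1 d2); split; [apply Rmin_pos; auto|].
    intros t Ht y [E|Hy].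
    + subst. apply H2. eapply Rlt_le_trans; [exact Ht| apply Rmin_r].
    + apply H1; auto. eapply Rlt_le_trans; [exact Ht| apply Rmin_l].
Qed.

Lemma deriv_left f s l c : derivable_pt_lim f s l ->
  (exists d, 0 < d /\ forall h, -d < h < 0 -> f (s + h) - f s <= c * h) -> c <= l.
Proof.
  intros Hd [d [Hdp Hh]]. destruct (Rle_or_lt c l) as [|Hlt]; auto.
  assert (He : 0 < c - l) by lra.
  destruct (Hd (c - l) He) as [dl Hdl].
  set (h := - (Rmin d dl) / 2).
  assert (Hm : 0 < Rmin d dl) by (apply Rmin_pos; [lra| apply (cond_pos dl)]).
  assert (Hh1 : -d < h < 0).
  { unfold h. pose proof (Rmin_l d dl). lra. }
  assert (Hh2 : Rabs h < dl).
  { unfold h. rewrite Rabs_left by lra. pose proof (Rmin_r d dl). lra. }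
  specialize (Hdl h ltac:(lra) Hh2). specialize (Hh h Hh1).
  set (q := (f (s + h) - f s) / h) in *.
  assert (Hq : q * h = f (s + h) - f s) by (unfold q; field; lra).
  apply Rabs_def2 in Hdl. destruct Hdl as [Hq1 Hq2].
  assert (q < c) by lra. nra.
Qed.

Lemma cont_delta f s B : continuity_pt f s -> f s < B ->
  exists d, 0 < d /\ forall t, Rabs (t - s) < d -> f t < B.
Proof.
  intros Hc Hs. destruct (Hc (B - f s) ltac:(lra)) as [a [Ha Hf]].
  exists a; split; auto. intros t Ht.
  destruct (Req_dec t s) as [E|E]; [subst; auto|].
  specialize (Hf t (conj (conj I (not_eq_sym E)) Ht)).
  simpl in Hf. unfold R_dist in Hf. apply Rabs_def2 in Hf. lra.
Qed.

Lemma cont_delta_gt f s B : continuity_pt f s -> B < f s ->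
  exists d, 0 < d /\ forall t, Rabs (t - s) < d -> B < f t.
Proof.
  intros Hc Hs. destruct (Hc (f s - B) ltac:(lra)) as [a [Ha Hf]].
  exists a; split; auto. intros t Ht.
  destruct (Req_dec t s) as [E|E]; [subst; auto|].
  specialize (Hf t (conj (conj I (not_eq_sym E)) Ht)).
  simpl in Hf. unfold R_dist in Hf. apply Rabs_def2 in Hf. lra.
Qed.

Lemma right_cont f l : filterlim (fun h => (f h - f 0) / h) (at_right 0) (locally l) ->
  forall eps, 0 < eps -> exists d, 0 < d /\ forall h, 0 < h < d -> Rabs (f h - f 0) < eps.
Proof.
  intros Hf eps He. apply filterlim_locally with (eps := mkposreal 1 Rlt_0_1) in Hf.
  destruct Hf as [d Hd].
  assert (Hl : 0 < Rabs l + 1) by (pose proof (Rabs_pos l); lra).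
  exists (Rmin d (eps / (Rabs l + 1))). split.
  { apply Rmin_pos; [apply (cond_pos d)| apply Rdiv_lt_0_compat; lra]. }
  intros h [Hh1 Hh2].
  assert (Hb : ball 0 d h).
  { change (Rabs (h - 0) < d). rewrite Rminus_0_r, Rabs_right by lra.
    pose proof (Rmin_l d (eps / (Rabs l + 1))). lra. }
  specialize (Hd h Hb Hh1). change (Rabs ((f h - f 0) / h - l) < 1) in Hd.
  set (q := (f h - f 0) / h) in *.
  assert (Hq : f h - f 0 = q * h) by (unfold q; field; lra).
  rewrite Hq, Rabs_mult, (Rabs_right h) by lra.
  assert (Rabs q < Rabs l + 1).
  { pose proof (Rabs_triang (q - l) l). replace (q - l + l) with q in H by ring. lra. }
  assert (h < eps / (Rabs l + 1)) by (pose proof (Rmin_r d (eps / (Rabs l + 1))); lra).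
  assert (h * (Rabs l + 1) < eps).
  { apply Rmult_lt_compat_r with (r := Rabs l + 1) in H0; auto.
    unfold Rdiv in H0. rewrite Rmult_assoc, Rinv_l in H0 by lra. lra. }
  pose proof (Rabs_pos q). nra.
Qed.


Lemma cont_aff f a b c s : continuity_pt f s -> continuity_pt (fun t => f t - a*(b + c*t)) s.
Proof.
intros. apply continuity_pt_minus; auto.
apply continuity_pt_mult. apply continuity_pt_const; intros ? ?; reflexivity.
apply continuity_pt_plus. apply continuity_pt_const; intros ? ?; reflexivity.
apply continuity_pt_mult. apply continuity_pt_const; intros ? ?; reflexivity.
apply derivable_continuous_pt, derivable_pt_id.
Qed.

Lemma core
  (V : Type) (adj : V -> V -> Prop) (nb : V -> list V) (mu : V -> V -> R)
  (Hsimple : simple_graph adj) (Hnb : nbrs_list adj nb)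
  (Hmu : good_weights adj nb mu)
  (x0 : V) (r : V -> nat) (Hr : is_dist_to adj x0 r)
  (C : R) (HC0 : 0 <= C) (HC : forall x, mean_curv nb mu r x <= C)
  (v0 : V -> R)
  (v : R -> V -> R)
  (Hvpos : forall t x, 0 <= t -> 0 < v t x)
  (Hvbd : exists M, forall t x, 0 <= t -> Rabs (v t x) <= M)
  (Hinit : forall x, v 0 x = v0 x)
  (Hdiff0 : forall x, exists l,
      filterlim (fun h => (v h x - v 0 x) / h) (at_right 0) (locally l))
  (Heq : forall t x, 0 < t ->
      is_derive (fun s => v s x) t (laplacian nb mu (fun y => ln (v t y)) x))
  (B : R) (HB0 : 0 < B) (HB : forall x, v0 x <= B)
  (eps : R) (He : 0 < eps) :
  forall t1 x1, 0 <= t1 -> v t1 x1 - eps * (INR (r x1) + 1 + (C / B + 1) * t1) <= B.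
Proof.
  set (K := C / B + 1).
  assert (HK : 0 < K) by (unfold K; assert (0 <= C / B) by (apply Rdiv_le_0_compat; lra); lra).
  set (phi := fun t y => v t y - eps * (INR (r y) + 1 + K * t)).
  change (forall t1 x1, 0 <= t1 -> phi t1 x1 <= B).
  destruct Hvbd as [M HM].
  destruct (INR_unbounded (M / eps)) as [N HN].
  destruct (ball_list V adj nb x0 r Hnb Hr N) as [L HL].
  assert (Hout : forall t y, 0 <= t -> ~ In y L -> phi t y < B).
  { intros t y Ht Hy. assert (Hry : (N < r y)%nat).
    { destruct (Nat.le_gt_cases (r y) N); auto. exfalso; auto. }
    apply lt_INR in Hry. pose proof (HM t y Ht) as Hv. pose proof (Rle_abs (v t y)).
    assert (M < eps * INR (r y)).
    { replace M with (eps * (M / eps)) by (field; lra). apply Rmult_lt_compat_l; lra. }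
    unfold phi. assert (0 <= K * t) by (apply Rmult_le_pos; lra). nra. }
  assert (F0 : forall y, phi 0 y <= B - eps).
  { intros y. unfold phi. rewrite Hinit. pose proof (HB y). pose proof (pos_INR (r y)).
    rewrite Rmult_0_r. nra. }
  intros t1 x1 Ht1. destruct (Rle_or_lt (phi t1 x1) B) as [|Hbad]; auto. exfalso.
  assert (Ht1p : 0 < t1).
  { destruct Ht1 as [|E]; auto. subst. pose proof (F0 x1). lra. }
  set (G := fun tau => 0 <= tau <= t1 /\ forall t y, 0 <= t <= tau -> phi t y <= B).
  assert (G0 : G 0).
  { split; [lra|]. intros t y Ht. replace t with 0 by lra. pose proof (F0 y); lra. }
  destruct (completeness G) as [s [Hs1 Hs2]].
  { exists t1. intros tau [Ht _]. lra. }
  { exists 0; exact G0. }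
  assert (Hs0 : 0 <= s) by (apply Hs1; exact G0).
  assert (Hst : s <= t1) by (apply Hs2; intros tau [Ht _]; lra).
  assert (F1 : forall t y, 0 <= t < s -> phi t y <= B).
  { intros t y Ht.
    destruct (classic (exists tau, G tau /\ t < tau)) as [[tau [[_ Hg] Htau]]|Hn].
    - apply Hg; lra.
    - exfalso. assert (s <= t); [|lra]. apply Hs2. intros tau Hg.
      destruct (Rle_or_lt tau t); auto. exfalso; apply Hn; eauto. }
  assert (Hsp : 0 < s).
  { destruct (list_delta V L 0 (fun y h => 0 < h -> phi h y < B)) as [d [Hd Hd2]].
    { intros y _. destruct (Hdiff0 y) as [l Hl].
      destruct (right_cont (fun h => v h y) l Hl eps He) as [d [Hd Hd2]].
      exists d; split; auto. intros h Hh Hh0.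
      rewrite Rminus_0_r, Rabs_right in Hh by lra.
      specialize (Hd2 h (conj Hh0 Hh)). simpl in Hd2. apply Rabs_def2 in Hd2.
      unfold phi. rewrite Hinit in Hd2. pose proof (HB y). pose proof (pos_INR (r y)).
      assert (0 <= K * h) by (apply Rmult_le_pos; lra). nra. }
    assert (Hg : G (Rmin (d/2) t1)).
    { split. { split; [apply Rmin_glb; lra| apply Rmin_r]. }
      intros t y [Ht0 Ht]. destruct Ht0 as [Ht0|E].
      - destruct (classic (In y L)) as [Hy|Hy].
        + left. apply Hd2; auto. rewrite Rminus_0_r, Rabs_right by lra.
          pose proof (Rmin_l (d/2) t1). lra.
        + left. apply Hout; lra || auto.
      - subst. pose proof (F0 y); lra. }
    apply Hs1 in Hg. assert (0 < Rmin (d/2) t1) by (apply Rmin_pos; lra). lra. }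
  assert (Hcont : forall y, continuity_pt (fun t => phi t y) s).
  { intros y. unfold phi. apply cont_aff. apply derivable_continuous_pt.
    exists (laplacian nb mu (fun z => ln (v s z)) y). apply is_derive_Reals. apply Heq; auto. }
  assert (F4 : forall y, phi s y <= B).
  { intros y. destruct (Rle_or_lt (phi s y) B) as [|Hg]; auto. exfalso.
    destruct (cont_delta_gt (fun t => phi t y) s B (Hcont y) Hg) as [d [Hd Hd2]].
    set (t := s - Rmin d s / 2).
    assert (Hm : 0 < Rmin d s) by (apply Rmin_pos; lra).
    assert (Hts : 0 <= t < s) by (unfold t; pose proof (Rmin_r d s); lra).
    specialize (F1 t y Hts). assert (B < phi t y); [|lra]. apply Hd2.
    unfold t. replace (s - Rmin d s / 2 - s) with (- (Rmin d s / 2)) by ring.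
    rewrite Rabs_Ropp, Rabs_right by lra. pose proof (Rmin_l d s). lra. }
  assert (F5 : exists y, phi s y = B).
  { destruct (classic (exists y, phi s y = B)) as [|Hn]; auto. exfalso.
    assert (Hlt : forall y, phi s y < B).
    { intros y. destruct (F4 y) as [|E]; auto. exfalso; apply Hn; eauto. }
    destruct (Req_dec s t1) as [E|E].
    { subst s. pose proof (F4 x1). lra. }
    destruct (list_delta V L s (fun y t => phi t y < B)) as [d [Hd Hd2]].
    { intros y _. apply cont_delta; auto. }
    assert (Hg : G (Rmin (s + d/2) t1)).
    { split. { split; [apply Rmin_glb; lra| apply Rmin_r]. }
      intros t y [Ht0 Ht]. destruct (Rlt_or_le t s) as [Hts|Hts].
      - apply F1; lra.
      - left. destruct (classic (In y L)) as [Hy|Hy].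
        + apply Hd2; auto. rewrite Rabs_right by lra. pose proof (Rmin_l (s + d/2) t1). lra.
        + apply Hout; lra || auto. }
    apply Hs1 in Hg. assert (s < Rmin (s + d/2) t1) by (apply Rmin_glb_lt; lra). lra. }
  destruct F5 as [y Hy].
  assert (Hmax : forall z, In z (nb y) -> v s z - eps * INR (r z) <= v s y - eps * INR (r y)).
  { intros z _. pose proof (F4 z). unfold phi in *. lra. }
  pose proof (lap_bound V adj nb mu x0 r Hsimple Hnb Hmu Hr (v s) eps y
      (fun z => Hvpos s z Hs0) ltac:(lra) Hmax) as Hlap.
  assert (Hvy : B <= v s y).
  { unfold phi in Hy. pose proof (pos_INR (r y)). assert (0 <= K * s) by (apply Rmult_le_pos; lra). nra. }
  assert (Hl2 : laplacian nb mu (fun z => ln (v s z)) y <= eps * C / B).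
  { eapply Rle_trans; [exact Hlap|].
    pose proof (HC y) as Hc.
    apply Rle_trans with (eps * C / v s y).
    - unfold Rdiv. apply Rmult_le_compat_r; [left; apply Rinv_0_lt_compat; lra|].
      apply Rmult_le_compat_l; lra.
    - unfold Rdiv. apply Rmult_le_compat_l; [apply Rmult_le_pos; lra|].
      apply Rinv_le_contravar; lra. }
  pose proof (Heq s y Hsp) as Hd. apply is_derive_Reals in Hd.
  pose proof (deriv_left (fun t => v t y) s _ (eps * K) Hd) as Hdl.
  assert (eps * K <= laplacian nb mu (fun z => ln (v s z)) y).
  { apply Hdl. exists s; split; auto. intros h Hh.
    pose proof (F1 (s + h) y ltac:(lra)). unfold phi in *. lra. }
  unfold K in H. assert (eps * (C / B + 1) = eps * C / B + eps) by (field; lra). lra.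
Qed.


Theorem theorem2
  (V : Type) (adj : V -> V -> Prop) (nb : V -> list V) (mu : V -> V -> R)
  (Hsimple : simple_graph adj) (Hnb : nbrs_list adj nb)
  (Hinf : infinite_vertices V) (Hconn : connected adj)
  (Hmu : good_weights adj nb mu)
  (x0 : V) (r : V -> nat) (Hr : is_dist_to adj x0 r)
  (C : R) (HC0 : 0 <= C) (HC : forall x, mean_curv nb mu r x <= C)
  (v0 : V -> R) (Hv0pos : forall x, 0 < v0 x)
  (Hv0bd : exists M, forall x, v0 x <= M)
  (v : R -> V -> R)
  (Hvpos : forall t x, 0 <= t -> 0 < v t x)
  (Hvbd : exists M, forall t x, 0 <= t -> Rabs (v t x) <= M)
  (Hinit : forall x, v 0 x = v0 x)
  (Hdiff0 : forall x, exists l,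
      filterlim (fun h => (v h x - v 0 x) / h) (at_right 0) (locally l))
  (Heq : forall t x, 0 < t ->
      is_derive (fun s => v s x) t (laplacian nb mu (fun y => ln (v t y)) x)) :
  forall t, 0 <= t ->
    Rbar_le (Lub_Rbar (fun a => exists x, a = v t x))
            (Lub_Rbar (fun a => exists x, a = v0 x)).
Proof.
  intros t Ht.
  assert (Main : forall B, (forall x, v0 x <= B) -> forall x, v t x <= B).
  { intros B HB x. assert (HB0 : 0 < B) by (pose proof (Hv0pos x0); pose proof (HB x0); lra).
    destruct (Rle_or_lt (v t x) B) as [|Hbad]; auto. exfalso.
    set (K := C / B + 1).
    assert (HK : 0 < K) by (unfold K; assert (0 <= C / B) by (apply Rdiv_le_0_compat; lra); lra).
    set (D := INR (r x) + 1 + K * t).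
    assert (HD : 0 < D) by (unfold D; pose proof (pos_INR (r x)); assert (0 <= K * t) by (apply Rmult_le_pos; lra); lra).
    set (eps := (v t x - B) / (2 * D)).
    assert (He : 0 < eps) by (unfold eps; apply Rdiv_lt_0_compat; lra).
    pose proof (core V adj nb mu Hsimple Hnb Hmu x0 r Hr C HC0 HC v0 v Hvpos Hvbd Hinit
      Hdiff0 Heq B HB0 HB eps He t x Ht) as Hc.
    fold K in Hc. fold D in Hc. unfold eps in Hc.
    assert ((v t x - B) / (2 * D) * D = (v t x - B) / 2) by (field; lra). lra. }
  destruct (Lub_Rbar_correct (fun a => exists x, a = v0 x)) as [Hub _].
  destruct (Lub_Rbar_correct (fun a => exists x, a = v t x)) as [_ Hlub].
  apply Hlub. intros a [x Ex]. subst a.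
  destruct (Lub_Rbar (fun a => exists x, a = v0 x)) as [b| |] eqn:E; simpl; auto.
  - apply Main. intros y. apply (Hub (v0 y)). eauto.
  - exfalso. apply (Hub (v0 x0)). eauto.
Qed.
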